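(* Let $C\subseteq\{0,1\}^n$ be a linear code with dual distance $\Gamma$ and $|C|\leq 2^{\frac{1}{64}n}$, let $\epsilon<1/8$, and let $C'\subseteq C$ be nonempty such that $C$ is $C'$-partially testable with $q$ (possibly adaptive) queries for proximity parameter $\epsilon$. If $X\sim U(C')$, then $H[X]\leq\log|C|-\left\lfloor\frac{1}{32}\Gamma/q\right\rfloor$.
   Context: A linear code is an $\mathbb{F}_2$-subspace of $\{0,1\}^n$; its dual distance is the minimum Hamming weight of a nonzero vector of its dual code $C^\perp$. Distance is normalized Hamming distance, $d(x,C)=\min_{c\in C}|\{i:x_i\neq c_i\}|/n$. $C$ is $C'$-partially testable with $q$ adaptive queries if there is a randomized algorithm that, given query access to $x\in\{0,1\}^n$, queries at most $q$ bits of $x$ (each query may depend on the answers to previous queries) and outputs accept/reject, such that every $x\in C'$ is accepted with probability at least $2/3$ and every $x$ with $d(x,C)>\epsilon$ is rejected with probability at least $2/3$. $U(C')$ is the uniform distribution on $C'$; $H$ is Shannon entropy with base-2 logarithms and $\log$ is base 2. *)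

(* Defs.v *)
From HB Require Import structures.
From mathcomp Require Import all_boot all_order all_algebra.
From mathcomp Require Import reals exp.
Set Implicit Arguments. Unset Strict Implicit. Unset Printing Implicit Defensive.
Import Order.TTheory GRing.Theory Num.Theory.
Local Open Scope ring_scope.

(* Binary words of length n: row vectors over F_2. A linear code is an
   F_2-subspace, i.e. a {vspace 'rV['F_2]_n}. *)
Notation word n := 'rV['F_2]_n.

Definition wt n (x : word n) : nat := #|[set i : 'I_n | x ord0 i != 0]|.
Definition ham n (x y : word n) : nat := #|[set i : 'I_n | x ord0 i != y ord0 i]|.

Definition dual_code n (C : {vspace word n}) : {set word n} :=
  [set y : word n | [forall x : word n, (x \in C) ==> ((x *m y^T) ord0 ord0 == 0)]].

Definition has_dual_distance n (C : {vspace word n}) (G : nat) : Prop :=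
  (exists2 y, (y \in dual_code C) && (y != 0) & wt y = G) /\
  (forall y, y \in dual_code C -> y != 0 -> (G <= wt y)%N).

Definition dist_code (R : realType) n (x : word n) (C : {vspace word n}) : R :=
  (\big[minn/n]_(c : word n | c \in C) ham x c)%:R / n%:R.

(* Deterministic adaptive query algorithms = decision trees: a node queries
   bit i of x and continues in t0 or t1 according to the answer; a leaf
   outputs accept (true) / reject (false). *)
Inductive dtree (n : nat) : Type :=
| Leaf of bool
| Query of 'I_n & dtree n & dtree n.

Fixpoint depth n (t : dtree n) : nat :=
  match t with
  | Leaf _ => 0
  | Query _ t0 t1 => (maxn (depth t0) (depth t1)).+1
  end.

Fixpoint run n (t : dtree n) (x : word n) : bool :=
  match t with
  | Leaf b => b
  | Query i t0 t1 => if x ord0 i == 1 then run t1 x else run t0 x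
  end.

(* A randomized algorithm with at most q adaptive queries: a probability
   distribution (finitely supported) over decision trees of depth <= q. *)
Definition rand_alg (R : realType) n := seq (R * dtree n).

Definition valid_alg (R : realType) n (A : rand_alg R n) (q : nat) : Prop :=
  all (fun p : R * dtree n => (0 <= p.1) && (depth p.2 <= q)%N) A /\
  \sum_(p <- A) p.1 = 1.

Definition acc_prob (R : realType) n (A : rand_alg R n) (x : word n) : R :=
  \sum_(p <- A) p.1 * (run p.2 x)%:R.

Definition partially_testable (R : realType) n (C : {vspace word n})
    (C' : {set word n}) (q : nat) (eps : R) : Prop :=
  exists A : rand_alg R n, valid_alg A q /\
    (forall x, x \in C' -> 2/3 <= acc_prob A x) /\
    (forall x, eps < dist_code R x C -> 2/3 <= 1 - acc_prob A x).

Definition log2 (R : realType) (x : R) : R := ln x / ln 2.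

Definition entropy (R : realType) (T : finType) (p : T -> R) : R :=
  - \sum_(x : T) (if p x == 0 then 0 else p x * log2 (p x)).

Definition unif (R : realType) (T : finType) (S : {set T}) : T -> R :=
  fun x => if x \in S then (#|S|%:R)^-1 else 0.

(* Main.v *)
Require Import Defs.
From HB Require Import structures.
From mathcomp Require Import all_boot all_order all_algebra.
From mathcomp Require Import reals exp.
From mathcomp Require Import lra zify ring.
Set Implicit Arguments. Unset Strict Implicit. Unset Printing Implicit Defensive.
Import Order.TTheory GRing.Theory Num.Theory.
Local Open Scope ring_scope.

Lemma F2_cases (z : 'F_2) : z = 0 \/ z = 1.
Proof. case: z => [[|[|m]]] //= H; [left|right]; by apply/val_inj. Qed.
Lemma F2_add_self (z : 'F_2) : z + z = 0.
Proof. by case: (F2_cases z) => ->; apply/val_inj. Qed.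
Lemma F2_opp (z : 'F_2) : - z = z.
Proof. by case: (F2_cases z) => ->; apply/val_inj. Qed.
Lemma F2_10 : (1 : 'F_2) != 0. Proof. by []. Qed.
Lemma F2_neq0 (z : 'F_2) : z != 0 -> z = 1.
Proof. by case: (F2_cases z) => ->. Qed.

Definition dot n (x y : word n) : 'F_2 := (x *m y^T) ord0 ord0.
Definition chi (R : realType) (z : 'F_2) : R := if z == 0 then 1 else -1.

Lemma dotE n (x y : word n) : dot x y = \sum_j x ord0 j * y ord0 j.
Proof. by rewrite /dot mxE; apply: eq_bigr => j _; rewrite mxE. Qed.
Lemma dotDl n (x z y : word n) : dot (x + z) y = dot x y + dot z y.
Proof. by rewrite /dot mulmxDl mxE. Qed.
Lemma dotC n (x y : word n) : dot x y = dot y x.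
Proof. by rewrite !dotE; apply: eq_bigr => j _; rewrite mulrC. Qed.
Lemma dotBl n (x z y : word n) : dot (x - z) y = dot x y - dot z y.
Proof. by rewrite dotDl /dot mulNmx [in X in _ + X = _]mxE. Qed.
Lemma dot0l n (y : word n) : dot 0 y = 0.
Proof. by rewrite /dot mul0mx mxE. Qed.

Lemma chiD (R : realType) (u v : 'F_2) : chi R (u + v) = chi R u * chi R v.
Proof.
by case: (F2_cases u) => ->; case: (F2_cases v) => ->;
  rewrite /chi ?addr0 ?add0r ?eqxx ?mulr1 ?mul1r ?F2_add_self ?eqxx //= ?mulrNN ?mulr1.
Qed.
Lemma chiN (R : realType) (u : 'F_2) : chi R (- u) = chi R u.
Proof. by rewrite F2_opp. Qed.
Lemma chiB (R : realType) (u v : 'F_2) : chi R (u - v) = chi R u * chi R v.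
Proof. by rewrite chiD chiN. Qed.

Lemma word_add_self n (x : word n) : x + x = 0.
Proof. by apply/matrixP => i j; rewrite !mxE F2_add_self. Qed.

Lemma char_sum (R : realType) n (P : {set word n})
  (cl : forall u v, u \in P -> v \in P -> u + v \in P) (y : word n) :
  \sum_(x in P) chi R (dot x y) =
    if [forall x in P, dot x y == 0] then #|P|%:R else 0.
Proof.
case: ifP => [/forall_inP H|/negbT].
  rewrite (eq_bigr (fun _ => 1)); first by rewrite sumr_const.
  by move=> x /H /eqP ->; rewrite /chi eqxx.
rewrite negb_forall_in => /exists_inP [x0 Px0 Hx0].
have Hx1 := F2_neq0 Hx0.
set S := \sum_(x in P) _.
have : S = - S.
  rewrite {1}/S (reindex_inj (addIr x0)) /= /S -sumrN.
  apply: eq_big => x.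
    apply/idP/idP => H; last by apply: cl.
    by have := cl _ _ H Px0; rewrite -addrA word_add_self addr0.
  by move=> _; rewrite dotDl chiD Hx1 /chi /= mulrN1.
move=> h; lra.
Qed.

Definition ind (R : realType) n (S : {set 'I_n}) (a x : word n) : R :=
  ([forall i in S, x ord0 i == a ord0 i])%:R.
Definition Vs n (S : {set 'I_n}) : {set word n} :=
  [set y : word n | [forall i, (i \notin S) ==> (y ord0 i == 0)]].
Definition ev n (i : 'I_n) : word n := \row_j ((j == i)%:R).

Lemma Vs_closed n (S : {set 'I_n}) u v : u \in Vs S -> v \in Vs S -> u + v \in Vs S.
Proof.
rewrite !inE => /forallP Hu /forallP Hv; apply/forallP => i; apply/implyP => Hi.
by rewrite mxE (eqP (implyP (Hu i) Hi)) (eqP (implyP (Hv i) Hi)) addr0.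
Qed.

Lemma dot_ev n (i : 'I_n) (z : word n) : dot (ev i) z = z ord0 i.
Proof.
rewrite dotE (bigD1 i) //= big1 ?addr0; first by rewrite mxE eqxx mul1r.
by move=> j /negbTE ji; rewrite mxE ji mul0r.
Qed.

Lemma ev_Vs n (S : {set 'I_n}) i : i \in S -> ev i \in Vs S.
Proof.
move=> iS; rewrite inE; apply/forallP => j; apply/implyP => jS.
rewrite mxE; case: (j =P i) => [ji|_] //; by move: jS; rewrite ji iS.
Qed.

Lemma ind_char (R : realType) n (S : {set 'I_n}) (a x : word n) :
  \sum_(y in Vs S) chi R (dot y (x - a)) = #|Vs S|%:R * ind R S a x.
Proof.
rewrite char_sum; last exact: Vs_closed.
rewrite /ind; case: ifP => [/forall_inP H|/negbT H].
  suff -> : [forall i in S, x ord0 i == a ord0 i] by rewrite mulr1.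
  apply/forall_inP => i iS; have := H _ (ev_Vs iS).
  by rewrite dot_ev !mxE subr_eq0.
suff -> : [forall i in S, x ord0 i == a ord0 i] = false by rewrite mulr0.
apply/negbTE; apply: contra H => /forall_inP H; apply/forall_inP => y.
rewrite inE => /forallP Hy; rewrite dotE big1 //= => j _.
case: (boolP (j \in S)) => jS.
  by rewrite !mxE (eqP (H _ jS)) subrr mulr0.
by rewrite (eqP (implyP (Hy j) jS)) mul0r.
Qed.

Lemma sum_ind (R : realType) n (P : {set word n})
  (cl : forall u v, u \in P -> v \in P -> u + v \in P) (S : {set 'I_n}) (a : word n) :
  \sum_(x in P) ind R S a x * #|Vs S|%:R =
  \sum_(y in Vs S) chi R (dot y a) *
     (if [forall x in P, dot x y == 0] then #|P|%:R else 0).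
Proof.
rewrite (eq_bigr (fun x => \sum_(y in Vs S) chi R (dot y x) * chi R (dot y a))); last first.
  move=> x _; rewrite mulrC -ind_char; apply: eq_bigr => y _.
  by rewrite dotC dotBl chiB (dotC x) (dotC a).
rewrite exchange_big /=; apply: eq_bigr => y _.
rewrite -char_sum // mulr_sumr; apply: eq_bigr => x _; by rewrite mulrC (dotC x).
Qed.

Lemma sum_ind0 (R : realType) n (P : {set word n})
  (cl : forall u v, u \in P -> v \in P -> u + v \in P) (S : {set 'I_n}) (a : word n)
  (H : forall y, y \in Vs S -> [forall x in P, dot x y == 0] -> y = 0) :
  \sum_(x in P) ind R S a x * #|Vs S|%:R = #|P|%:R.
Proof.
have V0 : (0 : word n) \in Vs S.
  by rewrite inE; apply/forallP => i; rewrite mxE implybT.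
rewrite sum_ind // (bigD1 0) //= big1.
  rewrite addr0 dot0l /chi eqxx mul1r ifT //; apply/forall_inP => x _; by rewrite dotC dot0l.
move=> y /andP [yV y0]; case: ifP => [Hf|]; last by rewrite mulr0.
by rewrite (H _ yV Hf) eqxx in y0.
Qed.

Lemma natb_mul (R : realType) (b1 b2 : bool) : (b1%:R : R) * b2%:R = (b1 && b2)%:R.
Proof. by case: b1; case: b2; rewrite /= ?mulr1 ?mulr0 ?mul0r. Qed.

Definition mrg n (S : {set 'I_n}) (a b : word n) : word n :=
  \row_i (if i \in S then a ord0 i else b ord0 i).
Definition cons_ab n (S T : {set 'I_n}) (a b : word n) : bool :=
  [forall i in S :&: T, a ord0 i == b ord0 i].

Lemma ind_mul (R : realType) n (S T : {set 'I_n}) (a b x : word n) :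
  ind R S a x * ind R T b x =
  (cons_ab S T a b)%:R * ind R (S :|: T) (mrg S a b) x.
Proof.
rewrite /ind !natb_mul; apply: (congr1 (fun b : bool => (b%:R : R))).
apply/idP/idP.
  case/andP => /forall_inP HS /forall_inP HT; apply/andP; split.
    apply/forall_inP => i; rewrite inE => /andP [iS iT].
    by rewrite -(eqP (HS _ iS)) (eqP (HT _ iT)).
  apply/forall_inP => i; rewrite inE mxE; case: ifP => [iS _|_ /= iT].
    exact: HS.
  exact: HT.
case/andP => /forall_inP Hc /forall_inP H; apply/andP; split.
  apply/forall_inP => i iS; have := H i; rewrite inE iS mxE iS; by apply.
apply/forall_inP => i iT; have := H i; rewrite inE iT orbT mxE => /(_ isT) /eqP ->.
case: ifP => // iS; apply: Hc; by rewrite inE iS.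
Qed.

Definition comb (R : realType) n (d : nat) (f : word n -> R) : Prop :=
  exists s : seq (R * {set 'I_n} * word n),
    all (fun e : R * {set 'I_n} * word n => #|e.1.2| <= d)%N s /\
    forall x, f x = \sum_(e <- s) e.1.1 * ind R e.1.2 e.2 x.

Lemma comb_mono (R : realType) n d d' (f : word n -> R) :
  (d <= d')%N -> comb d f -> comb d' f.
Proof.
move=> dd [s [Hs Hf]]; exists s; split => //.
apply/allP => e /(allP Hs) /= H; exact: leq_trans H dd.
Qed.

Lemma comb_ext (R : realType) n d (f g : word n -> R) :
  (forall x, f x = g x) -> comb d f -> comb d g.
Proof. move=> E [s [Hs Hf]]; exists s; split => // x; by rewrite -E. Qed.

Lemma comb_zero (R : realType) n d : comb d (fun _ : word n => (0 : R)).
Proof. by exists [::]; split => // x; rewrite big_nil. Qed.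

Lemma comb_ind (R : realType) n (S : {set 'I_n}) a : comb #|S| (ind R S a).
Proof.
exists [:: (1, S, a)]; split; first by rewrite /= leqnn.
by move=> x; rewrite big_seq1 mul1r.
Qed.

Lemma comb_one (R : realType) n : comb 0 (fun _ : word n => (1 : R)).
Proof.
apply: comb_ext (comb_mono _ (comb_ind R set0 0)); last by rewrite cards0.
move=> x; rewrite /ind; suff -> : [forall i in set0, x ord0 i == (0 : word n) ord0 i] by [].
by apply/forall_inP => i; rewrite inE.
Qed.

Lemma comb_add (R : realType) n d (f g : word n -> R) :
  comb d f -> comb d g -> comb d (fun x => f x + g x).
Proof.
move=> [s [Hs Hf]] [t [Ht Hg]]; exists (s ++ t); split.
  by rewrite all_cat Hs Ht.
by move=> x; rewrite big_cat Hf Hg.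
Qed.

Lemma comb_scale (R : realType) n d (c : R) (f : word n -> R) :
  comb d f -> comb d (fun x => c * f x).
Proof.
move=> [s [Hs Hf]]; exists [seq (c * e.1.1, e.1.2, e.2) | e <- s]; split.
  by rewrite all_map.
move=> x; rewrite Hf big_map mulr_sumr; apply: eq_bigr => e _; by rewrite mulrA.
Qed.

Lemma comb_mul (R : realType) n d1 d2 (f g : word n -> R) :
  comb d1 f -> comb d2 g -> comb (d1 + d2) (fun x => f x * g x).
Proof.
move=> [s [Hs Hf]] [t [Ht Hg]].
exists [seq (e.1.1.1 * e.2.1.1 * (cons_ab e.1.1.2 e.2.1.2 e.1.2 e.2.2)%:R,
             e.1.1.2 :|: e.2.1.2, mrg e.1.1.2 e.1.2 e.2.2) | e <- [seq (e1, e2) | e1 <- s, e2 <- t]].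
split.
  rewrite all_map; apply/allP => [[e1 e2]] /allpairsP [[e1' e2'] /= [H1 H2 [-> ->]]] /=.
  apply: leq_trans (leq_card_setU _ _) _; apply: leq_add.
    exact: (allP Hs _ H1).
  exact: (allP Ht _ H2).
move=> x; rewrite big_map big_allpairs Hf Hg mulr_suml; apply: eq_bigr => e1 _.
rewrite mulr_sumr; apply: eq_bigr => e2 _ /=.
by rewrite mulrACA ind_mul mulrA.
Qed.

Lemma ind_set1 (R : realType) n (i : 'I_n) (a x : word n) :
  ind R [set i] a x = (x ord0 i == a ord0 i)%:R.
Proof.
rewrite /ind; congr (nat_of_bool _)%:R; apply/forall_inP/idP => [H|/eqP H j].
  by apply: H; rewrite inE.
by rewrite inE => /eqP ->; rewrite H.
Qed.

Lemma comb_run (R : realType) n (t : dtree n) :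
  comb (depth t) (fun x => ((run t x)%:R : R)).
Proof.
elim: t => [b|i t0 IH0 t1 IH1] /=.
  apply: comb_ext (comb_scale (b%:R) (comb_one R n)) => x; by rewrite mulr1.
have E : forall x : word n, ((if x ord0 i == 1 then run t1 x else run t0 x)%:R : R) =
   ind R [set i] (const_mx 1) x * (run t1 x)%:R + ind R [set i] 0 x * (run t0 x)%:R.
  move=> x; rewrite !ind_set1 !mxE.
  by case: (F2_cases (x ord0 i)) => ->; rewrite /= ?eqxx /= ?mul1r ?mul0r ?addr0 ?add0r.
apply: comb_ext (fun x => esym (E x)) _.
apply: comb_add.
  apply: comb_mono (comb_mul (comb_ind R [set i] (const_mx 1)) IH1).
  by rewrite cards1 add1n ltnS leq_maxr.
apply: comb_mono (comb_mul (comb_ind R [set i] 0) IH0).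
by rewrite cards1 add1n ltnS leq_maxl.
Qed.

Lemma comb_acc (R : realType) n (A : rand_alg R n) q :
  all (fun p : R * dtree n => (depth p.2 <= q)%N) A ->
  comb q (acc_prob A).
Proof.
rewrite /acc_prob; elim: A => [|p A IH] /=.
  move=> _; apply: comb_ext (comb_zero R n q) => x; by rewrite big_nil.
case/andP => Hp HA.
apply: comb_ext (comb_add (comb_scale p.1 (comb_mono Hp (comb_run R p.2))) (IH HA)).
by move=> x; rewrite big_cons.
Qed.

Lemma comb_pow (R : realType) n q (f : word n -> R) m :
  comb q f -> comb (m * q) (fun x => f x ^+ m).
Proof.
move=> Hf; elim: m => [|m IH].
  apply: comb_ext (comb_one R n) => x; by rewrite expr0.
apply: comb_ext (comb_mul Hf IH) => x; by rewrite exprS.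
Qed.

Lemma comb_key (R : realType) n (P Q : {set word n})
  (clP : forall u v, u \in P -> v \in P -> u + v \in P)
  (clQ : forall u v, u \in Q -> v \in Q -> u + v \in Q) d (f : word n -> R)
  (HP : forall S : {set 'I_n}, (#|S| <= d)%N -> forall y, y \in Vs S ->
          [forall x in P, dot x y == 0] -> y = 0)
  (HQ : forall S : {set 'I_n}, (#|S| <= d)%N -> forall y, y \in Vs S ->
          [forall x in Q, dot x y == 0] -> y = 0) :
  comb d f -> (\sum_(x in P) f x) * #|Q|%:R = #|P|%:R * \sum_(x in Q) f x.
Proof.
move=> [s [Hs Hf]].
rewrite (eq_bigr _ (fun x _ => Hf x)) [in RHS](eq_bigr _ (fun x _ => Hf x)).
rewrite exchange_big [in RHS]exchange_big /= mulr_suml mulr_sumr.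
rewrite big_seq_cond [in RHS]big_seq_cond; apply: eq_bigr => e /andP [es _].
have dS := allP Hs _ es.
have A := @sum_ind0 R n P clP e.1.2 e.2 (HP _ dS).
have B := @sum_ind0 R n Q clQ e.1.2 e.2 (HQ _ dS).
rewrite -mulr_suml in A; rewrite -mulr_suml in B.
rewrite -!mulr_sumr -B -A; ring.
Qed.

Lemma ball_sum n :
  (\sum_(A : {set 'I_n}) 7 ^ (n - #|A|) = 8 ^ n)%N.
Proof.
have -> : (8 = 7 + 1)%N by [].
rewrite Pascal.
rewrite (partition_big (fun A : {set 'I_n} => inord #|A| : 'I_n.+1) predT) //=.
apply: eq_bigr => i _.
rewrite exp1n muln1 (eq_bigr (fun _ => 7 ^ (n - i))%N); last first.
  move=> A /eqP <-; rewrite inordK //; rewrite ltnS; apply: leq_trans (max_card _) _; by rewrite card_ord.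
rewrite sum_nat_const; congr (_ * _)%N.
rewrite -[X in 'C(X, _)](card_ord n) -card_draws; apply: eq_card => A.
rewrite inE /=; apply/eqP/eqP => [<-|->]; last by rewrite inord_val.
rewrite inordK // ltnS; apply: leq_trans (max_card _) _; by rewrite card_ord.
Qed.

Lemma ball_bound n :
  (#|[set A : {set 'I_n} | (8 * #|A| < n)%N]| * 7 ^ (n - n %/ 8) <= 8 ^ n)%N.
Proof.
rewrite -ball_sum -sum_nat_const.
rewrite [X in (_ <= X)%N](bigID (fun A => A \in [set A : {set 'I_n} | (8 * #|A| < n)%N])) /=.
apply: leq_trans (leq_addr _ _); apply: leq_sum => A.
rewrite inE => H; rewrite leq_exp2l // leq_sub2l //.
rewrite leq_divRL //; lia.
Qed.

Lemma leq_expl (a b e : nat) : (a <= b)%N -> (a ^ e <= b ^ e)%N.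
Proof. move=> ab; elim: e => [|e IH]; first by rewrite !expn0. by rewrite !expnS leq_mul. Qed.

Lemma num_ineq : (81 * 2 ^ 129 <= 7 ^ 56)%N.
Proof.
have E1 : (7 ^ 56 = 49 ^ 28)%N.
  rewrite -[56%N]/(2 * 28)%N expnM -[(7 ^ 2)%N]/49%N. reflexivity.
have E2 : (48 ^ 28 = 3 ^ 28 * 2 ^ 112)%N.
  rewrite -[48%N]/(3 * 2 ^ 4)%N expnMn -expnM -[(4 * 28)%N]/112%N. reflexivity.
have E3 : (81 * 2 ^ 129 = (3 ^ 4 * 2 ^ 17) * 2 ^ 112)%N.
  rewrite -mulnA -expnD -[(17 + 112)%N]/129%N -[(3 ^ 4)%N]/81%N. reflexivity.
rewrite E1 E3; apply: (leq_trans _ (leq_expl 28 (_ : 48 <= 49)%N)); last exact: isT.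
rewrite E2 leq_mul2r; apply/orP; right.
rewrite -[28%N]/(4 + 24)%N expnD leq_mul2l; apply/orP; right.
apply: (leq_trans (leq_expl 17 (_ : 2 <= 3)%N)); first exact: isT.
exact: leq_pexp2l.
Qed.

Lemma base_ineq : (81 * 2 * 8 ^ 64 <= 2 ^ 64 * 7 ^ 56)%N.
Proof.
have E : (8 ^ 64 = 2 ^ (3 * 64))%N by rewrite expnM.
rewrite E -[(3 * 64)%N]/(128 + 64)%N expnD mulnA -[(81 * 2 * 2 ^ 128)%N]mulnA -expnS.
rewrite [X in (_ <= X)%N]mulnC leq_mul2r; apply/orP; right.
exact: num_ineq.
Qed.

Lemma count_ineq (n k c B : nat) : (c ^ 64 <= 2 ^ n)%N -> (32 * k <= n)%N ->
  (B * 7 ^ (n - n %/ 8) <= 8 ^ n)%N -> (9 ^ k * c * B <= 2 ^ n)%N.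
Proof.
move=> Hc Hk HB.
rewrite -(leq_exp2r _ _ (_ : 0 < 64)%N) //.
rewrite -(@leq_pmul2r (7 ^ (56 * n))) ?expn_gt0 //.
rewrite !expnMn -expnM -mulnA.
have H1 : (9 ^ (k * 64) <= 81 ^ n)%N.
  rewrite -[81%N]/(9 ^ 2)%N -expnM; apply: leq_pexp2l => //; lia.
have H2 : (B ^ 64 * 7 ^ (56 * n) <= (8 ^ n) ^ 64)%N.
  apply: (@leq_trans ((B * 7 ^ (n - n %/ 8)) ^ 64)); last by apply: leq_expl.
  rewrite expnMn -expnM leq_mul2l; apply/orP; right.
  apply: leq_pexp2l => //.
  have := leq_trunc_div n 8; lia.
apply: (leq_trans (leq_mul (leq_mul H1 Hc) H2)).
rewrite -!expnM -[(n * 64)%N]mulnC !expnM -!expnMn.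
apply: leq_expl; exact: base_ineq.
Qed.

Lemma entropy_unif (R : realType) (T : finType) (S : {set T}) :
  S != set0 -> entropy (unif R S) = log2 (#|S|%:R : R).
Proof.
move=> S0; have cpos : (0 < #|S|)%N by rewrite card_gt0.
have cR : (0 : R) < #|S|%:R by rewrite ltr0n.
rewrite /entropy /unif.
rewrite (eq_bigr (fun x => if x \in S then #|S|%:R^-1 * log2 (#|S|%:R^-1) else 0)); last first.
  move=> x _; case: (boolP (x \in S)) => xS; last by rewrite eqxx.
  by rewrite invr_eq0 gt_eqF.
rewrite -big_mkcond /= sumr_const.
rewrite /log2 lnV ?posrE // -mulrnAl -mulr_natl mulrA mulfV ?gt_eqF // mul1r.
by rewrite mulNr opprK.
Qed.

Lemma F2_sub_eq (u v : 'F_2) : u + (u != v)%:R = v.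
Proof.
by case: (F2_cases u) => ->; case: (F2_cases v) => ->; apply/val_inj.
Qed.

Definition vecA n (A : {set 'I_n}) : word n := \row_i ((i \in A)%:R).

Lemma near_count (R : realType) n (C : {vspace word n}) (eps : R) :
  (0 < n)%N -> eps < 1/8 ->
  (#|[set x : word n | ~~ (eps < dist_code R x C)%R]| <=
   #|[set c : word n | c \in C]| * #|[set A : {set 'I_n} | (8 * #|A| < n)%N]|)%N.
Proof.
move=> n0 he.
rewrite -cardsX.
apply: leq_trans (leq_imset_card (fun p : word n * {set 'I_n} => p.1 + vecA p.2) _).
apply: subset_leq_card; apply/subsetP => x; rewrite inE -leNgt => hd.
set mu := \big[minn/n]_(c | c \in C) ham x c.
have Hmu : mu = n \/ exists2 c0, c0 \in C & mu = ham x c0.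
  rewrite /mu; apply: (big_ind (fun m => m = n \/ exists2 c0, c0 \in C & m = ham x c0)) => [|a b Ha Hb|c0 Hc0]; first by left.
    by rewrite /minn; case: ifP.
  by right; exists c0.
have n0R : (0 : R) < n%:R by rewrite ltr0n.
have h8 : (8 * mu < n)%N.
  rewrite -(ltr_nat R) natrM.
  have : mu%:R / n%:R < (1 / 8 : R) by apply: le_lt_trans hd he.
  rewrite ltr_pdivrMr // => h; lra.
case: Hmu => [Hm|[c0 c0C Hm]]; first by rewrite Hm in h8; lia.
apply/imsetP; exists (c0, [set i | x ord0 i != c0 ord0 i]).
  by rewrite !inE c0C /=; rewrite Hm /ham in h8.
apply/matrixP => i j; rewrite /= !mxE inE (ord1 i).
by rewrite eq_sym F2_sub_eq.
Qed.

Lemma acc_bounds (R : realType) n (A : rand_alg R n) q x :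
  valid_alg A q -> 0 <= acc_prob A x <= 1.
Proof.
move=> [HA H1]; rewrite /acc_prob -[X in _ <= _ <= X]H1; elim: A HA {H1} => [|p A IH] /=.
  by rewrite !big_nil lexx.
case/andP => /andP [p0 _] /IH /andP [h1 h2]; rewrite !big_cons.
apply/andP; split.
  apply: addr_ge0 => //; apply: mulr_ge0 => //; exact: ler0n.
apply: lerD => //; by case: (run p.2 x); rewrite ?mulr1 ?mulr0.
Qed.

Lemma pow_hyp (R : realType) n c :
  (c%:R <= (2 : R) `^ (n%:R / 64)) -> (c ^ 64 <= 2 ^ n)%N.
Proof.
move=> h; rewrite -(ler_nat R) !natrX.
have h1 : (c%:R : R) ^+ 64 <= ((2 : R) `^ (n%:R / 64)) ^+ 64.
  by apply: lerXn2r => //; rewrite nnegrE ?ler0n ?powR_ge0.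
apply: (le_trans h1).
rewrite -(powR_mulrn 64) ?powR_ge0 // -powRrM (_ : n%:R / 64 * 64%:R = n%:R).
  by rewrite powR_mulrn.
by rewrite -mulrA mulVf ?mulr1 // pnatr_eq0.
Qed.

Lemma real_step (R : realType) (c' c N nN X Y a b s t : R) :
  0 <= c -> 0 < N -> 0 < t ->
  c' * a <= X -> X * N = c * Y -> Y <= nN + N * b ->
  t * nN <= N -> t * a = s -> t * b = 1 -> c' * s <= 2 * c.
Proof.
move=> c0 N0 t0 L K U T E1 E2.
have h1 : c' * a * N <= c * Y by rewrite -K; apply: ler_wpM2r => //; exact: ltW.
have h2 : c * Y <= c * (nN + N * b) by apply: ler_wpM2l.
have h3 : c' * s * N <= 2 * c * N.
  have h4 : t * (c' * a * N) <= t * (c * (nN + N * b)).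
    apply: ler_wpM2l; [exact: ltW | exact: le_trans h1 h2].
  have h5 : c * (t * nN) <= c * N by apply: ler_wpM2l.
  have e1 : t * (c' * a * N) = c' * s * N by rewrite -E1; ring.
  have e2 : t * (c * (nN + N * b)) = c * (t * nN) + c * N by rewrite -[in RHS](mulr1 (c * N)) -E2; ring.
  rewrite -e1; apply: (le_trans h4); rewrite e2; lra.
by rewrite -(ler_pM2r N0).
Qed.

Lemma log_step (R : realType) (c' c k : nat) : (0 < c')%N -> (c' * 2 ^ k <= c)%N ->
  log2 (c'%:R : R) <= log2 (c%:R : R) - k%:R.
Proof.
move=> c'0 h.
have L0 : 0 < ln (2 : R) by apply: ln_gt0; lra.
have c'R : (0 : R) < c'%:R by rewrite ltr0n.
have pR : (0 : R) < 2 ^+ k by apply: exprn_gt0; lra.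
have cR : (0 : R) < c%:R.
  rewrite ltr0n; apply: leq_trans h; by rewrite muln_gt0 c'0 expn_gt0.
have h1 : ln (c'%:R * 2 ^+ k : R) <= ln (c%:R).
  rewrite ler_ln ?posrE ?mulr_gt0 //; by rewrite -natrX -natrM ler_nat.
rewrite lnM ?posrE // lnXn // in h1.
have e : ln (2 : R) *+ k = ln 2 * k%:R by rewrite mulr_natr.
rewrite e in h1.
rewrite /log2 lerBrDr.
have E : ln (c'%:R : R) / ln 2 + k%:R = (ln c'%:R + ln 2 * k%:R) / ln 2.
  by field; rewrite gt_eqF.
rewrite E ler_pM2r; last by rewrite invr_gt0.
exact: h1.
Qed.

Lemma three_two (R : realType) : (3 : R) * (2 / 3) = 2. Proof. lra. Qed.
Lemma three_one (R : realType) : (3 : R) * (1 / 3) = 1. Proof. lra. Qed.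

Unset Implicit Arguments.

Theorem lemma15 (R : realType) (n : nat) (C : {vspace word n}) (G : nat)
  (C' : {set word n}) (q : nat) (eps : R) :
  has_dual_distance C G ->
  (#|[set c : word n | c \in C]|%:R <= (2 : R) `^ (n%:R / 64)) ->
  eps < 1/8 ->
  (0 < q)%N ->
  C' != set0 ->
  (forall x, x \in C' -> x \in C) ->
  partially_testable C C' q eps ->
  entropy (unif R C') <=
    log2 (#|[set c : word n | c \in C]|%:R : R) - ((G %/ (32 * q))%N)%:R.
Proof.
move=> [[y0 /andP [y0d y0n] wy0] Hdd] Hc he q0 C'0 C'C [A [HA [Hacc Hrej]]].
set Cs := [set c : word n | c \in C].
set k := (G %/ (32 * q))%N.
have Gn : (G <= n)%N.
  by rewrite -wy0; apply: leq_trans (max_card _) _; rewrite card_ord.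
have kG : (k * (32 * q) <= G)%N by apply: leq_trunc_div.
have c'c : (#|C'| <= #|Cs|)%N.
  by apply: subset_leq_card; apply/subsetP => x /C'C; rewrite inE.
have c'0 : (0 < #|C'|)%N by rewrite card_gt0.
rewrite entropy_unif //; apply: log_step => //.
case: (posnP k) => [->|k0]; first by rewrite expn0 muln1.
have n0 : (0 < n)%N by nia.
have k32 : (32 * k <= n)%N by nia.
set m := (2 * k)%N.
have mqG : (m * q < G)%N by rewrite /m; nia.
set p := acc_prob A.
have Hcomb : comb (m * q) (fun x => p x ^+ m).
  apply: comb_pow; apply: comb_acc.
  case: HA => HA _; apply: sub_all HA => e /andP [_ ->].
  done.
have key : (\sum_(x in Cs) p x ^+ m) * #|[set: word n]|%:R =
           #|Cs|%:R * \sum_(x in [set: word n]) p x ^+ m.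
  apply: comb_key Hcomb.
  - by move=> u v; rewrite !inE; exact: memvD.
  - by move=> u v; rewrite !inE.
  - move=> S HS y yV /forall_inP Hy; apply/eqP; apply: contraT => yn0.
    have yd : y \in dual_code C.
      rewrite inE; apply/forallP => x; apply/implyP => xC.
      by have := Hy x; rewrite inE xC => /(_ isT).
    have := Hdd y yd yn0.
    have : (wt y <= #|S|)%N.
      apply: subset_leq_card; apply/subsetP => i; rewrite inE => yi.
      move: yV; rewrite inE => /forallP /(_ i); apply: contraLR => iS.
      by rewrite iS.
    lia.
  - move=> S _ y _ /forall_inP Hy; apply/matrixP => i j; rewrite (ord1 i) mxE.
    by have := Hy (ev j) (in_setT _); rewrite dot_ev => /eqP.
have pb := fun x => acc_bounds x (proj1 (conj HA HA)).
set NS := [set x : word n | ~~ (eps < dist_code R x C)].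
have nN : (9 ^ k * #|NS| <= #|[set: word n]|)%N.
  rewrite cardsT card_mx card_Fp // mul1n.
  apply: leq_trans (count_ineq (pow_hyp Hc) k32 (ball_bound n)).
  rewrite -mulnA leq_mul2l; apply/orP; right; exact: near_count.
have L : #|C'|%:R * (2/3) ^+ m <= \sum_(x in Cs) p x ^+ m.
  rewrite (bigID (fun x => x \in C')) /=.
  apply: ler_wpDr.
    apply: sumr_ge0 => x _; apply: exprn_ge0; by case/andP: (pb x).
  rewrite (eq_bigl (fun x => x \in C')); last first.
    move=> x; rewrite inE; apply/andP/idP => [[]//|xC']; split => //; exact: C'C.
  rewrite mulr_natl -sumr_const; apply: ler_sum => x xC'.
  apply: lerXn2r; rewrite ?nnegrE; [lra | by case/andP: (pb x) | exact: Hacc].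
have U : \sum_(x in [set: word n]) p x ^+ m <=
         #|NS|%:R + #|[set: word n]|%:R * (1/3) ^+ m.
  apply: (le_trans (y := \sum_(x in [set: word n]) ((if x \in NS then 1 else 0) + (1/3 : R) ^+ m))).
    apply: ler_sum => x _.
    case/andP: (pb x) => p0 p1.
    case: (boolP (x \in NS)) => xN.
      apply: (le_trans (y := 1)); first exact: exprn_ile1.
      rewrite lerDl; apply: exprn_ge0; lra.
    rewrite add0r; apply: lerXn2r; rewrite ?nnegrE //; first lra.
    move: xN; rewrite inE negbK => /Hrej h; rewrite /p; lra.
  rewrite big_split /= sumr_const mulr_natl -big_mkcondr /=.
  rewrite (eq_bigl (fun x => x \in NS)); last by move=> x; rewrite inE.
  by rewrite sumr_const.
have N0 : (0 : R) < #|[set: word n]|%:R.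
  by rewrite ltr0n; apply/card_gt0P; exists 0; exact: in_setT.
have t0 : (0 : R) < 3 ^+ m by rewrite exprn_gt0 // ltr0n.
have T : (3 : R) ^+ m * #|NS|%:R <= #|[set: word n]|%:R.
  have e : (3 ^ m = 9 ^ k)%N by rewrite /m expnM.
  by rewrite -natrX -natrM ler_nat e.
have E1 : (3 : R) ^+ m * (2 / 3) ^+ m = 2 ^+ m.
  by rewrite -exprMn three_two.
have E2 : (3 : R) ^+ m * (1 / 3) ^+ m = 1.
  by rewrite -exprMn three_one expr1n.
have Hs := real_step (ler0n R #|Cs|) N0 t0 L key U T E1 E2.
have Hn : (#|C'| * 2 ^ m <= 2 * #|Cs|)%N.
  by rewrite -(ler_nat R) natrM natrX natrM.
have e2 : (2 ^ m = 2 ^ k * 2 ^ k)%N by rewrite /m mul2n -addnn expnD.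
have k2 : (2 <= 2 ^ k)%N by rewrite -{1}(expn1 2) leq_pexp2l.
rewrite -(@leq_pmul2r 2) //; apply: leq_trans _ (leq_trans Hn _); last by rewrite mulnC.
by rewrite e2 mulnA leq_mul2l k2 orbT.
Qed.
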